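(* Let $k \geq 1$ and $p \geq 1$ be integers, let $B \in \mathbb{R}^{N\times N}$, let $P \in \mathbb{R}^{N\times N}$ be a diagonal matrix whose diagonal entries are each $0$ or $1$, and let $y(t) = e^{tB}y^0$ be the solution of $y'(t) = B y(t)$ for some $y^0 \in \mathbb{R}^N$. Fix $t_n$ and $\Delta t > 0$. Apply one step of the LTS-AB$k$($p$) scheme (defined in the context) with exact input data $$y_{n-\ell} = y(t_n - \ell \Delta t), \quad \ell = 0,\dots,k-1, \qquad \widetilde y_{-j/p} = P\, y(t_n - j\Delta t/p), \quad j = 1,\dots,k-1,$$ producing $y_{n+1}$. Then the scheme is consistent of order $k$: there is a constant $C$ depending only on $k$, $p$, $B$, $P$ and $y^0$ (and on an upper bound for $|t_n|$) such that for all sufficiently small $\Delta t>0$, $$\| y_{n+1} - y(t_n + \Delta t)\| \leq C\, \Delta t^{k+1}.$$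
   Context: Polynomials: for integer $j\ge 0$, $\gamma_j(\xi) = (-1)^j \int_0^{\xi} \binom{-s}{j}\, ds$ and $\widetilde\gamma_j(\xi) = \gamma_j'(\xi) = (-1)^j\binom{-\xi}{j} = \xi(\xi+1)\cdots(\xi+j-1)/j!$ (with $\widetilde\gamma_0\equiv 1$), where $\binom{x}{j} = x(x-1)\cdots(x-j+1)/j!$. Adams–Bashforth coefficients: $\alpha_\ell = (-1)^\ell \sum_{i=\ell}^{k-1}\binom{i}{\ell}\gamma_i(1)$, $\ell=0,\dots,k-1$ (the classical $k$-step Adams–Bashforth scheme is $y_{n+1} = y_n + \Delta t\, B\sum_{\ell=0}^{k-1}\alpha_\ell y_{n-\ell}$). LTS coefficients: $\beta_{m,\ell} = \sum_{i=0}^{k-1} \alpha_i \sum_{j=\ell}^{k-1} (-1)^\ell \binom{j}{\ell}\, \widetilde\gamma_j\!\left(\frac{m-i}{p}\right)$ for $m=0,\dots,p-1$, $\ell=0,\dots,k-1$. LTS-AB$k$($p$) step: set $\widetilde y_0 := y_n$ (the values $\widetilde y_{-j/p}$, $j=1,\dots,k-1$, are given inputs; note $\widetilde y_{-j/p}$ for $j \geq p$ refers to a past time $t_n - j\Delta t/p$ as well). For $m = 0,1,\dots,p-1$ compute $$\widetilde y_{(m+1)/p} = \widetilde y_{m/p} + \frac{\Delta t}{p}\, B(I-P)\sum_{\ell=0}^{k-1}\beta_{m,\ell}\, y_{n-\ell} + \frac{\Delta t}{p}\, BP\sum_{\ell=0}^{k-1}\alpha_\ell\, \widetilde y_{(m-\ell)/p},$$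 and set $y_{n+1} := \widetilde y_1$. For $P=0$ or $p=1$ this reduces to the classical $k$-step Adams–Bashforth method. Here $I$ is the $N\times N$ identity and $\|\cdot\|$ any norm on $\mathbb{R}^N$. *)

(* Defs.v *)
From Stdlib Require Import Reals Lra Lia Arith.
Open Scope R_scope.

(* Vectors of R^N are represented as functions nat -> R (only components
   0..N-1 matter); N x N matrices as nat -> nat -> R (only entries < N matter). *)
Definition Vec := nat -> R.
Definition Mat := nat -> nat -> R.

Fixpoint rsum (n : nat) (f : nat -> R) : R :=
  match n with O => 0 | S n' => rsum n' f + f n' end.

Definition vadd (u v : Vec) : Vec := fun i => u i + v i.
Definition vsub (u v : Vec) : Vec := fun i => u i - v i.
Definition vscale (c : R) (v : Vec) : Vec := fun i => c * v i.
Definition vsum (n : nat) (f : nat -> Vec) : Vec := fun i => rsum n (fun l => f l i).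
Definition matvec (N : nat) (A : Mat) (v : Vec) : Vec :=
  fun i => rsum N (fun j => A i j * v j).

(* generalized binomial coefficient binom(x,j) = x(x-1)...(x-j+1)/j! *)
Fixpoint gbinom (x : R) (j : nat) : R :=
  match j with
  | O => 1
  | S j' => gbinom x j' * (x - INR j') / INR (S j')
  end.

Lemma gbinom_cont (j : nat) : forall s, continuity_pt (fun s => gbinom (- s) j) s.
Proof.
  induction j as [|j IH]; intros s; simpl.
  - apply continuity_pt_const. intros a b; reflexivity.
  - unfold Rdiv.
    apply (continuity_pt_mult (fun s => gbinom (- s) j * (- s - INR j))
                              (fun _ => / INR (S j))).
    + apply (continuity_pt_mult (fun s => gbinom (- s) j) (fun s => - s - INR j)).
      * apply IH.
      * apply (continuity_pt_minus (fun s => - s) (fun _ => INR j)).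
        -- apply (continuity_pt_opp (fun s => s)). apply derivable_continuous_pt, derivable_pt_id.
        -- apply continuity_pt_const. intros a b; reflexivity.
    + apply continuity_pt_const. intros a b; reflexivity.
Qed.

Definition gamma1 (j : nat) : R :=
  (-1) ^ j * RiemannInt (@continuity_implies_RiemannInt
                           (fun s => gbinom (- s) j) 0 1 (Rlt_le 0 1 Rlt_0_1)
                           (fun x _ => gbinom_cont j x)).

Definition gtilde (j : nat) (xi : R) : R := (-1) ^ j * gbinom (- xi) j.

Definition alpha (k l : nat) : R :=
  (-1) ^ l * rsum k (fun i => if (l <=? i)%nat then C i l * gamma1 i else 0).

Definition beta (k p m l : nat) : R :=
  rsum k (fun i => alpha k i *
    rsum k (fun j => if (l <=? j)%nat
                     then (-1) ^ l * C j l * gtilde j ((INR m - INR i) / INR p)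
                     else 0)).

Section LTS.
Variables (N : nat) (B P : Mat) (k p : nat) (dt : R).
(* ys l = y_{n-l} (l = 0..k-1);  neg j = tilde y_{-j/p} (j = 1..k-1) *)
Variables (ys : nat -> Vec) (neg : nat -> Vec).

(* tilde y_{(m-l)/p}, given h i = tilde y_{i/p} for 0 <= i <= m *)
Definition lts_lookup (h : nat -> Vec) (m l : nat) : Vec :=
  if (l <=? m)%nat then h (m - l)%nat else neg (l - m)%nat.

(* tilde y_{(m+1)/p} computed from the history h *)
Definition lts_incr (m : nat) (h : nat -> Vec) : Vec :=
  let c := dt / INR p in
  let s1 := vsum k (fun l => vscale (beta k p m l) (ys l)) in
  let s2 := vsum k (fun l => vscale (alpha k l) (lts_lookup h m l)) in
  vadd (vadd (h m) (vscale c (matvec N B (vsub s1 (matvec N P s1)))))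
       (vscale c (matvec N B (matvec N P s2))).

(* lts_hist m i = tilde y_{i/p} for 0 <= i <= m *)
Fixpoint lts_hist (m : nat) : nat -> Vec :=
  match m with
  | O => fun _ => ys O
  | S m' => let h := lts_hist m' in
            fun i => if (i <=? m')%nat then h i else lts_incr m' h
  end.

(* y_{n+1} := tilde y_1 *)
Definition lts_step : Vec := lts_hist p p.
End LTS.

(* Main.v *)
Require Import Defs.
From Stdlib Require Import Reals Lra Lia Arith.
From Coquelicot Require Import Coquelicot.
Open Scope R_scope.


Lemma rsum_ext n F G : (forall l, (l < n)%nat -> F l = G l) -> rsum n F = rsum n G.
Proof. induction n; simpl; intros H; auto. rewrite IHn, H; auto. Qed.

Lemma rsum_plus n F G : rsum n (fun l => F l + G l) = rsum n F + rsum n G.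
Proof. induction n; simpl; [lra|]. rewrite IHn; lra. Qed.

Lemma rsum_minus n F G : rsum n (fun l => F l - G l) = rsum n F - rsum n G.
Proof. induction n; simpl; [lra|]. rewrite IHn; lra. Qed.

Lemma rsum_scal n c F : rsum n (fun l => c * F l) = c * rsum n F.
Proof. induction n; simpl; [lra|]. rewrite IHn; lra. Qed.

Lemma rsum_zero n : rsum n (fun _ => 0) = 0.
Proof. induction n; simpl; [lra|]. rewrite IHn; lra. Qed.

Lemma rsum_comm n m (F : nat -> nat -> R) :
  rsum n (fun a => rsum m (fun b => F a b)) = rsum m (fun b => rsum n (fun a => F a b)).
Proof.
  induction n; simpl.
  - rewrite rsum_zero; auto.
  - rewrite IHn, <- rsum_plus; auto.
Qed.

Lemma rsum_shift n F : rsum (S n) F = F 0%nat + rsum n (fun l => F (S l)).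
Proof. induction n; simpl in *; [lra|]. rewrite IHn; lra. Qed.

Lemma rsum_single n i F : (i < n)%nat -> (forall j, (j < n)%nat -> j <> i -> F j = 0) ->
  rsum n F = F i.
Proof.
  induction n; intros Hi H; [lia|]. simpl.
  destruct (Nat.eq_dec i n) as [->|Hne].
  - rewrite (rsum_ext n F (fun _ => 0)). rewrite rsum_zero; lra.
    intros l Hl; apply H; lia.
  - rewrite IHn; [| lia | intros; apply H; lia]. rewrite (H n); [lra|lia|lia].
Qed.

Lemma rsum_extend n m F : (n <= m)%nat -> (forall l, (n <= l < m)%nat -> F l = 0) ->
  rsum m F = rsum n F.
Proof.
  induction m; intros Hnm H.
  - replace n with 0%nat by lia; auto.
  - destruct (Nat.eq_dec n (S m)) as [->|Hne]; auto.
    simpl. rewrite IHm; [| lia | intros; apply H; lia]. rewrite (H m); [lra|lia].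
Qed.

Lemma rsum_le n F G : (forall l, (l < n)%nat -> F l <= G l) -> rsum n F <= rsum n G.
Proof. induction n; simpl; intros H; [lra|]. pose proof (H n ltac:(lia)). pose proof (IHn ltac:(intros; apply H; lia)). lra. Qed.

Lemma rsum_nonneg n F : (forall l, (l < n)%nat -> 0 <= F l) -> 0 <= rsum n F.
Proof. intros H. rewrite <- (rsum_zero n). apply rsum_le; auto. Qed.

Lemma rsum_abs_le n F G : (forall l, (l < n)%nat -> Rabs (F l) <= G l) -> Rabs (rsum n F) <= rsum n G.
Proof.
  induction n; simpl; intros H. rewrite Rabs_R0; lra.
  eapply Rle_trans; [apply Rabs_triang|].
  pose proof (H n ltac:(lia)). pose proof (IHn ltac:(intros; apply H; lia)). lra.
Qed.

Lemma rsum_lin_bound n a b E : (forall l, (l < n)%nat -> Rabs (b l) <= E) ->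
  Rabs (rsum n (fun l => a l * b l)) <= rsum n (fun l => Rabs (a l)) * E.
Proof.
  intros H. rewrite Rmult_comm, <- rsum_scal. apply rsum_abs_le. intros l Hl.
  rewrite Rabs_mult. specialize (H l Hl). pose proof (Rabs_pos (a l)). nra.
Qed.

Lemma rsum_term_le n F i : (i < n)%nat -> (forall l, (l < n)%nat -> 0 <= F l) -> F i <= rsum n F.
Proof.
  induction n; intros Hi H; [lia|]. simpl.
  destruct (Nat.eq_dec i n) as [->|Hne].
  - pose proof (rsum_nonneg n F ltac:(intros; apply H; lia)). lra.
  - pose proof (IHn ltac:(lia) ltac:(intros; apply H; lia)). pose proof (H n ltac:(lia)). lra.
Qed.

Lemma fin_bound n (Pr : nat -> R -> Prop) :
  (forall j M M', Pr j M -> M <= M' -> Pr j M') ->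
  (forall j, (j < n)%nat -> exists M, Pr j M) -> exists M, forall j, (j < n)%nat -> Pr j M.
Proof.
  intros Hm; induction n; intros H.
  - exists 0; intros; lia.
  - destruct IHn as [M1 HM1]; [intros; apply H; lia|].
    destruct (H n ltac:(lia)) as [M2 HM2].
    exists (Rmax M1 M2). intros j Hj. destruct (Nat.eq_dec j n) as [->|].
    + eapply Hm; [eauto| apply Rmax_r].
    + eapply Hm; [apply HM1; lia| apply Rmax_l].
Qed.

Lemma C_nn n : Binomial.C n n = 1.
Proof. unfold Binomial.C. rewrite Nat.sub_diag. simpl. field. apply INR_fact_neq_0. Qed.
Lemma C_n0 n : Binomial.C n 0 = 1.
Proof. unfold Binomial.C. rewrite Nat.sub_0_r. simpl. field. apply INR_fact_neq_0. Qed.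

Definition Cb (n l : nat) : R := if (l <=? n)%nat then Binomial.C n l else 0.

Lemma Cb_n0 n : Cb n 0 = 1.
Proof. unfold Cb. simpl. apply C_n0. Qed.

Lemma Cb_big n l : (n < l)%nat -> Cb n l = 0.
Proof. intros H. unfold Cb. destruct (Nat.leb_spec l n); [lia|auto]. Qed.

Lemma Cb_pascal n l : Cb (S n) (S l) = Cb n l + Cb n (S l).
Proof.
  unfold Cb. destruct (Nat.leb_spec (S l) (S n)); destruct (Nat.leb_spec l n);
  destruct (Nat.leb_spec (S l) n); try lia.
  - rewrite pascal; auto.
  - assert (l = n) by lia. subst. rewrite !C_nn. lra.
  - lra.
Qed.

Lemma gtilde_0 x : gtilde 0 x = 1.
Proof. unfold gtilde; simpl; lra. Qed.

Lemma gtilde_S j x : gtilde (S j) x = gtilde j x * (x + INR j) / INR (S j).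
Proof.
  unfold gtilde. change (gbinom (- x) (S j)) with (gbinom (- x) j * (- x - INR j) / INR (S j)).
  change ((-1) ^ S j) with (-1 * (-1)^j).
  field. apply not_0_INR; lia.
Qed.

Lemma gtilde_S0 j : gtilde (S j) 0 = 0.
Proof.
  induction j. rewrite gtilde_S, gtilde_0. simpl; field.
  rewrite gtilde_S, IHj. field. apply not_0_INR; lia.
Qed.

Lemma gtilde_diff j x : gtilde (S j) x - gtilde (S j) (x - 1) = gtilde j x.
Proof.
  induction j.
  - rewrite !gtilde_S, !gtilde_0. simpl; field.
  - rewrite !(gtilde_S (S j)).
    assert (E : gtilde (S j) (x - 1) = gtilde (S j) x - gtilde j x) by lra.
    rewrite E. rewrite (gtilde_S j x). rewrite !S_INR.
    field. split; [pose proof (pos_INR j); lra|]. pose proof (pos_INR j); lra.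
Qed.

Lemma gtilde_mulx j x : x * gtilde j x = INR (S j) * gtilde (S j) x - INR j * gtilde j x.
Proof. rewrite gtilde_S. field. apply not_0_INR; lia. Qed.

Definition ND (i : nat) (f : R -> R) : R :=
  rsum (S i) (fun l => (-1) ^ l * Cb i l * f (- INR l)).

Lemma D_ext i f g : (forall x, f x = g x) -> ND i f = ND i g.
Proof. intros H. unfold ND. apply rsum_ext. intros. rewrite H; auto. Qed.

Lemma D_add i f g : ND i (fun x => f x + g x) = ND i f + ND i g.
Proof. unfold ND. rewrite <- rsum_plus. apply rsum_ext. intros; ring. Qed.

Lemma D_scal i c f : ND i (fun x => c * f x) = c * ND i f.
Proof. unfold ND. rewrite <- rsum_scal. apply rsum_ext. intros; ring. Qed.

Lemma D_sub i f g : ND i (fun x => f x - g x) = ND i f - ND i g.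
Proof. unfold ND. rewrite <- rsum_minus. apply rsum_ext. intros; ring. Qed.

Lemma D_0 f : ND 0 f = f 0.
Proof. unfold ND. simpl. rewrite Cb_n0. replace (-0) with 0 by lra. lra. Qed.

Lemma D_pascal i f : ND (S i) f = ND i f - ND i (fun x => f (x - 1)).
Proof.
  unfold ND. rewrite rsum_shift.
  set (H := fun l => (-1) ^ l * Cb i l * f (- INR l)).
  assert (E : rsum (S i) (fun l => (-1) ^ S l * Cb (S i) (S l) * f (- INR (S l)))
     = rsum (S i) (fun l => H (S l)) - rsum (S i) (fun l => (-1) ^ l * Cb i l * f (- INR l - 1))).
  { rewrite <- rsum_minus. apply rsum_ext. intros l _. unfold H.
    rewrite Cb_pascal, S_INR. replace (- (INR l + 1)) with (- INR l - 1) by ring. simpl. ring. }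
  rewrite E. clear E.
  assert (E2 : rsum (S (S i)) H = rsum (S i) H).
  { apply rsum_extend; [lia|]. intros l Hl. unfold H. rewrite Cb_big; [ring|lia]. }
  pose proof (rsum_shift (S i) H) as E3.
  assert (E4 : H 0%nat = (-1) ^ 0 * Cb (S i) 0 * f (- INR 0)) by (unfold H; rewrite !Cb_n0; ring).
  lra.
Qed.

Lemma D_phi i j : ND i (gtilde j) = if (i =? j)%nat then 1 else 0.
Proof.
  revert j; induction i; intros j.
  - rewrite D_0. destruct j; simpl. apply gtilde_0. apply gtilde_S0.
  - rewrite D_pascal. destruct j.
    + rewrite (D_ext i (fun x => gtilde 0 (x - 1)) (gtilde 0)).
      replace (S i =? 0)%nat with false by reflexivity. lra. intros; rewrite !gtilde_0; auto.
    + rewrite (D_ext i (fun x => gtilde (S j) (x - 1)) (fun x => gtilde (S j) x - gtilde j x)).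
      2:{ intros x. pose proof (gtilde_diff j x). lra. }
      rewrite D_sub, (IHi j). replace (S i =? S j)%nat with (i =? j)%nat by reflexivity. lra.
Qed.

Inductive Span (K : nat) : (R -> R) -> Prop :=
 | Sp_phi j : (j < K)%nat -> Span K (gtilde j)
 | Sp_add f g : Span K f -> Span K g -> Span K (fun x => f x + g x)
 | Sp_scal c f : Span K f -> Span K (fun x => c * f x)
 | Sp_ext f g : Span K f -> (forall x, f x = g x) -> Span K g.

Lemma Newton K f : Span K f -> forall x, f x = rsum K (fun i => gtilde i x * ND i f).
Proof.
  induction 1; intros x.
  - rewrite (rsum_single K j); auto.
    + rewrite D_phi, Nat.eqb_refl. ring.
    + intros l Hl Hne. rewrite D_phi. destruct (Nat.eqb_spec l j); [lia|ring].
  - rewrite IHSpan1, IHSpan2, <- rsum_plus. apply rsum_ext. intros. rewrite D_add. ring.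
  - rewrite IHSpan, <- rsum_scal. apply rsum_ext. intros. rewrite D_scal. ring.
  - rewrite <- H0, IHSpan. apply rsum_ext. intros. rewrite (D_ext l g f); auto.
Qed.

Lemma Span_mono K K' f : (K <= K')%nat -> Span K f -> Span K' f.
Proof. intros HK; induction 1; [apply Sp_phi; lia| apply Sp_add | apply Sp_scal | eapply Sp_ext]; eauto. Qed.

Lemma Span_zero K : (1 <= K)%nat -> Span K (fun _ => 0).
Proof.
  intros HK. apply (Sp_ext K (fun x => 0 * gtilde 0 x)). apply Sp_scal, Sp_phi; lia. intros; ring.
Qed.

Lemma Span_const K c : (1 <= K)%nat -> Span K (fun _ => c).
Proof.
  intros HK. apply (Sp_ext K (fun x => c * gtilde 0 x)). apply Sp_scal, Sp_phi; lia.
  intros; rewrite gtilde_0; ring.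
Qed.

Lemma Span_rsum K n F : (1 <= K)%nat -> (forall j, (j < n)%nat -> Span K (F j)) ->
  Span K (fun x => rsum n (fun j => F j x)).
Proof.
  intros HK; induction n; intros H; simpl.
  - apply Span_zero; auto.
  - apply Sp_add; [apply IHn; intros; apply H; lia| apply H; lia].
Qed.

Lemma Span_mulx K f : Span K f -> Span (S K) (fun x => x * f x).
Proof.
  induction 1.
  - apply (Sp_ext (S K) (fun x => INR (S j) * gtilde (S j) x + (- INR j) * gtilde j x)).
    + apply Sp_add; apply Sp_scal; apply Sp_phi; lia.
    + intros x. rewrite gtilde_mulx. ring.
  - apply (Sp_ext _ _ _ (Sp_add _ _ _ IHSpan1 IHSpan2)). intros; simpl; ring.
  - apply (Sp_ext _ _ _ (Sp_scal _ c _ IHSpan)). intros; simpl; ring.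
  - apply (Sp_ext _ _ _ IHSpan). intros; simpl. rewrite H0; auto.
Qed.

Lemma Span_pow c r : Span (S r) (fun u => (c + u) ^ r).
Proof.
  induction r.
  - apply (Sp_ext _ _ _ (Span_const 1 1 ltac:(lia))). intros; simpl; ring.
  - apply (Sp_ext (S (S r)) (fun u => c * (c + u) ^ r + u * (c + u) ^ r)).
    + apply Sp_add. apply Sp_scal. apply (Span_mono (S r)); auto.
      apply Span_mulx; auto.
    + intros; simpl; ring.
Qed.

Lemma alpha_sum k q : rsum k (fun l => alpha k l * q (- INR l)) = rsum k (fun i => gamma1 i * ND i q).
Proof.
  unfold alpha.
  transitivity (rsum k (fun l => rsum k (fun i => if (l <=? i)%nat then (-1)^l * Binomial.C i l * gamma1 i * q (- INR l) else 0))).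
  { apply rsum_ext; intros l _. symmetry.
    rewrite (rsum_ext k _ (fun i => ((-1)^l * q (- INR l)) * (if (l <=? i)%nat then Binomial.C i l * gamma1 i else 0))).
    - rewrite rsum_scal. ring.
    - intros i _. destruct (l <=? i)%nat; ring. }
  rewrite rsum_comm. apply rsum_ext. intros i Hi. unfold ND.
  rewrite <- rsum_scal. rewrite (rsum_extend (S i) k); [| lia |].
  - apply rsum_ext. intros l Hl. unfold Cb. destruct (Nat.leb_spec l i); [ring|lia].
  - intros l Hl. destruct (Nat.leb_spec l i); [lia|auto].
Qed.

Lemma gamma_int i : is_RInt (gtilde i) 0 1 (gamma1 i).
Proof.
  unfold gamma1.
  match goal with |- context [RiemannInt ?pr] => pose proof (ex_RInt_Reals_aux_1 _ _ _ pr) as H end.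
  apply (is_RInt_scal _ _ _ ((-1)^i)) in H.
  eapply is_RInt_ext; [|exact H]. intros x _. reflexivity.
Qed.

Lemma rsum_int n c : is_RInt (fun x => rsum n (fun i => c i * gtilde i x)) 0 1 (rsum n (fun i => c i * gamma1 i)).
Proof.
  induction n; simpl.
  - pose proof (@is_RInt_const R_CompleteNormedModule 0 1 0) as H.
    unfold scal in H; simpl in H; unfold mult in H; simpl in H. rewrite Rmult_0_r in H. exact H.
  - apply (is_RInt_plus _ _ _ _ _ _ IHn (is_RInt_scal _ _ _ (c n) _ (gamma_int n))).
Qed.

Lemma Span_int K f : Span K f -> is_RInt f 0 1 (rsum K (fun i => gamma1 i * ND i f)).
Proof.
  intros H. pose proof (Newton K f H) as HN.
  pose proof (rsum_int K (fun i => ND i f)) as HI.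
  eapply is_RInt_ext in HI. 
  - replace (rsum K (fun i => gamma1 i * ND i f)) with (rsum K (fun i => ND i f * gamma1 i)); [exact HI|].
    apply rsum_ext; intros; ring.
  - intros x _. simpl. rewrite HN. apply rsum_ext; intros; ring.
Qed.

Lemma Span_cont K f : Span K f -> forall x, continuous f x.
Proof.
  induction 1; intros x.
  - apply continuity_pt_filterlim. unfold gtilde.
    apply (continuity_pt_scal (fun s => gbinom (- s) j)). apply gbinom_cont.
  - apply (continuous_plus f g); auto.
  - apply (continuous_mult (fun _ => c) f); auto. apply continuous_const.
  - apply (continuous_ext f g); auto.
Qed.

Lemma AB_exact k (F f : R -> R) : (forall u, is_derive F u (f u)) -> Span k f ->
  F 1 - F 0 = rsum k (fun l => alpha k l * f (- INR l)).
Proof.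
  intros HD HS. rewrite alpha_sum.
  pose proof (Span_int k f HS) as H1.
  assert (H2 : is_RInt f 0 1 (minus (F 1) (F 0))).
  { apply (@is_RInt_derive R_CompleteNormedModule F f 0 1). intros; auto. intros; eapply Span_cont; eauto. }
  apply (@is_RInt_unique R_CompleteNormedModule) in H1. apply (@is_RInt_unique R_CompleteNormedModule) in H2. rewrite H1 in H2.
  rewrite H2. unfold minus, plus, opp; simpl. ring.
Qed.

Fixpoint Yp (N : nat) (B : Mat) (y : R -> Vec) (r : nat) (t : R) : Vec :=
  match r with O => y t | S r => matvec N B (Yp N B y r t) end.

Lemma is_derive_rsum n (F : nat -> R -> R) F' t :
  (forall j, (j < n)%nat -> is_derive (F j) t (F' j)) ->
  is_derive (fun s => rsum n (fun j => F j s)) t (rsum n F').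
Proof.
  induction n; intros H; simpl.
  - apply (@is_derive_const R_AbsRing R_NormedModule 0 t).
  - apply (@is_derive_plus R_AbsRing R_NormedModule); [apply IHn; intros; apply H; lia| apply H; lia].
Qed.

Lemma is_derive_extR (f g : R -> R) x l : (forall t, f t = g t) -> is_derive f x l -> is_derive g x l.
Proof. apply is_derive_ext. Qed.

Section An.
Variables (N : nat) (B : Mat) (y : R -> Vec).
Hypothesis Hder : forall i t, (i < N)%nat ->
     derivable_pt_lim (fun s => y s i) t (matvec N B (y t) i).

Lemma Yp_deriv r i t : (i < N)%nat -> is_derive (fun s => Yp N B y r s i) t (Yp N B y (S r) t i).
Proof.
  revert i t; induction r; intros i t Hi.
  - simpl. apply is_derive_Reals. apply Hder; auto.
  - simpl Yp at 2. unfold matvec at 2.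
    apply (is_derive_extR (fun s => rsum N (fun j => B i j * Yp N B y r s j))); [reflexivity|].
    apply is_derive_rsum. intros j Hj. apply is_derive_scal. apply IHr; auto.
Qed.

Definition pw (q : nat) (x : R) : R := x ^ q / INR (fact q).

Lemma pw_deriv q a t : is_derive (fun t => pw (S q) (t - a)) t (pw q (t - a)).
Proof.
  unfold pw.
  apply (is_derive_extR (fun t => / INR (fact (S q)) * (t - a) ^ (S q))).
  { intros; unfold Rdiv; ring. }
  replace ((t - a) ^ q / INR (fact q)) with (/ INR (fact (S q)) * (INR (S q) * 1 * (t - a) ^ Init.Nat.pred (S q))).
  - apply is_derive_scal. apply (is_derive_pow (fun t => t - a)).
    auto_derive; auto; ring.
  - rewrite fact_simpl, mult_INR. simpl Init.Nat.pred. field. split; [apply INR_fact_neq_0| apply not_0_INR; lia].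
Qed.

Lemma pw_0 x : pw 0 x = 1.
Proof. unfold pw; simpl; field. Qed.
Lemma pw_S0 q : pw (S q) 0 = 0.
Proof. unfold pw; simpl; rewrite Rmult_0_l; unfold Rdiv; ring. Qed.

Definition Tay (n r i : nat) (a t : R) : R := rsum n (fun q => Yp N B y (r + q) a i * pw q (t - a)).
Definition Rem (n r i : nat) (a t : R) : R := Yp N B y r t i - Tay n r i a t.

Lemma Tay_deriv n r i a t : is_derive (fun t => Tay (S n) r i a t) t (Tay n (S r) i a t).
Proof.
  unfold Tay.
  apply (is_derive_extR (fun t => Yp N B y (r + 0) a i * pw 0 (t - a) + rsum n (fun q => Yp N B y (r + S q) a i * pw (S q) (t - a)))).
  { intros; rewrite rsum_shift; auto. }
  replace (rsum n (fun q => Yp N B y (S r + q) a i * pw q (t - a))) with (plus 0 (rsum n (fun q => Yp N B y (r + S q) a i * pw q (t - a)))).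
  2:{ unfold plus; simpl. rewrite Rplus_0_l. apply rsum_ext. intros. rewrite <- plus_n_Sm. auto. }
  apply (@is_derive_plus R_AbsRing R_NormedModule).
  - apply (is_derive_extR (fun _ => Yp N B y (r + 0) a i)). intros; rewrite pw_0; ring.
    apply (@is_derive_const R_AbsRing R_NormedModule).
  - apply is_derive_rsum. intros j _. apply is_derive_scal. apply pw_deriv.
Qed.

Lemma Rem_deriv n r i a t : (i < N)%nat -> is_derive (fun t => Rem (S n) r i a t) t (Rem n (S r) i a t).
Proof.
  intros Hi. unfold Rem.
  apply (@is_derive_minus R_AbsRing R_NormedModule). apply Yp_deriv; auto. apply Tay_deriv.
Qed.

Lemma Rem_at n r i a : Rem (S n) r i a a = 0.
Proof.
  unfold Rem, Tay. rewrite rsum_shift. rewrite Rminus_diag, pw_0, Nat.add_0_r.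
  rewrite (rsum_ext n _ (fun _ => 0)). rewrite rsum_zero. ring.
  intros. rewrite pw_S0. ring.
Qed.

Lemma Rem_bound Smax lo hi M :
  (forall s t i, (s <= Smax)%nat -> (i < N)%nat -> lo <= t <= hi -> Rabs (Yp N B y s t i) <= M) ->
  forall n r i a t, (r + n <= Smax)%nat -> (i < N)%nat -> lo <= a <= hi -> lo <= t <= hi ->
  Rabs (Rem n r i a t) <= M * Rabs (t - a) ^ n.
Proof.
  intros HM n. induction n; intros r i a t Hrn Hi Ha Ht.
  - unfold Rem, Tay. simpl. rewrite Rminus_0_r, Rmult_1_r. apply HM; auto; lia.
  - assert (M0 : 0 <= M) by (eapply Rle_trans; [apply Rabs_pos| apply (HM 0%nat a i); auto; lia]).
    destruct (Rtotal_order a t) as [Hlt|[Heq|Hgt]].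
    + destruct (MVT_cor2 (fun t => Rem (S n) r i a t) (fun t => Rem n (S r) i a t) a t Hlt) as [c [Hc Hc2]].
      { intros c _. apply is_derive_Reals. apply Rem_deriv; auto. }
      rewrite Rem_at in Hc. rewrite Rminus_0_r in Hc. rewrite Hc.
      rewrite Rabs_mult. specialize (IHn (S r) i a c ltac:(lia) Hi Ha ltac:(lra)).
      rewrite (Rabs_right (t - a)) by lra. rewrite (Rabs_right (c - a)) in IHn by lra.
      simpl pow. 
      assert ((c - a) ^ n <= (t - a) ^ n) by (apply pow_incr; lra).
      assert (M * (c - a) ^ n <= M * (t - a) ^ n) by (apply Rmult_le_compat_l; auto).
      assert (Rabs (Rem n (S r) i a c) * (t - a) <= M * (t - a) ^ n * (t - a)) by (apply Rmult_le_compat_r; lra).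
      lra.
    + subst. rewrite Rem_at, Rabs_R0. rewrite Rminus_diag, Rabs_R0. simpl. lra.
    + destruct (MVT_cor2 (fun t => Rem (S n) r i a t) (fun t => Rem n (S r) i a t) t a Hgt) as [c [Hc Hc2]].
      { intros c _. apply is_derive_Reals. apply Rem_deriv; auto. }
      rewrite Rem_at in Hc.
      replace (Rem (S n) r i a t) with (- (Rem n (S r) i a c * (a - t))) by lra.
      rewrite Rabs_Ropp, Rabs_mult. specialize (IHn (S r) i a c ltac:(lia) Hi Ha ltac:(lra)).
      rewrite (Rabs_left (t - a)) by lra. rewrite (Rabs_left (c - a)) in IHn by lra.
      rewrite (Rabs_right (a - t)) by lra.
      simpl pow. 
      assert ((- (c - a)) ^ n <= (- (t - a)) ^ n) by (apply pow_incr; lra).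
      replace (- (t - a)) with (a - t) in * by ring.
      replace (- (c - a)) with (a - c) in * by ring.
      assert (M * (a - c) ^ n <= M * (a - t) ^ n) by (apply Rmult_le_compat_l; auto).
      assert (Rabs (Rem n (S r) i a c) * (a - t) <= M * (a - t) ^ n * (a - t)) by (apply Rmult_le_compat_r; lra).
      lra.
Qed.

Lemma Yp_bounded Smax lo hi : lo <= hi -> exists M,
  forall s t i, (s <= Smax)%nat -> (i < N)%nat -> lo <= t <= hi -> Rabs (Yp N B y s t i) <= M.
Proof.
  intros Hlh.
  destruct (fin_bound (S Smax) (fun s M => forall i t, (i < N)%nat -> lo <= t <= hi -> Rabs (Yp N B y s t i) <= M)) as [M HM].
  - intros j M M' H1 H2 i t Hi Ht. eapply Rle_trans; [apply H1|]; auto.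
  - intros s Hs.
    destruct (fin_bound N (fun i M => forall t, lo <= t <= hi -> Rabs (Yp N B y s t i) <= M)) as [M HM].
    + intros j M M' H1 H2 t Ht. eapply Rle_trans; [apply H1|]; auto.
    + intros i Hi.
      destruct (continuity_ab_maj (fun t => Rabs (Yp N B y s t i)) lo hi Hlh) as [c [Hc _]].
      * intros c _. apply (continuity_pt_comp (fun t => Yp N B y s t i) Rabs).
        -- apply continuity_pt_filterlim. apply (@ex_derive_continuous R_AbsRing R_NormedModule).
           eexists. apply Yp_deriv; auto.
        -- apply Rcontinuity_abs.
      * exists (Rabs (Yp N B y s c i)). auto.
    + exists M. intros; auto.
  - exists M. intros s t i Hs Hi Ht. apply HM; auto; lia.
Qed.
End An.

Lemma rsum_mulr n G c : rsum n G * c = rsum n (fun l => G l * c).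
Proof. rewrite Rmult_comm, <- rsum_scal. apply rsum_ext; intros; ring. Qed.

Lemma beta_sum k p m F :
  rsum k (fun l => beta k p m l * F (- INR l)) =
  rsum k (fun i => alpha k i * rsum k (fun j => gtilde j ((INR m - INR i) / INR p) * ND j F)).
Proof.
  set (xi := fun i => (INR m - INR i) / INR p).
  transitivity (rsum k (fun l => rsum k (fun i => rsum k (fun j => alpha k i *
     (if (l <=? j)%nat then (-1)^l * Binomial.C j l * gtilde j (xi i) * F (- INR l) else 0))))).
  { apply rsum_ext; intros l _. unfold beta. rewrite rsum_mulr. apply rsum_ext; intros i _.
    rewrite Rmult_assoc, rsum_mulr, <- rsum_scal. apply rsum_ext; intros j _.
    unfold xi. destruct (l <=? j)%nat; ring. }
  rewrite rsum_comm. apply rsum_ext; intros i _. rewrite rsum_comm.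
  rewrite <- rsum_scal. apply rsum_ext; intros j Hj. unfold ND.
  rewrite <- rsum_scal, <- rsum_scal.
  rewrite (rsum_extend (S j) k); [| lia |].
  - apply rsum_ext. intros l Hl. unfold Cb. destruct (Nat.leb_spec l j); [|lia]. unfold xi. ring.
  - intros l Hl. destruct (Nat.leb_spec l j); [lia|ring].
Qed.

Lemma gtilde_bound j x : Rabs (gtilde j x) <= (Rabs x + INR j) ^ j.
Proof.
  induction j.
  - rewrite gtilde_0, Rabs_R1. simpl; lra.
  - rewrite gtilde_S. unfold Rdiv. rewrite !Rabs_mult.
    assert (HS : 1 <= INR (S j)) by (rewrite S_INR; pose proof (pos_INR j); lra).
    rewrite (Rabs_right (/ INR (S j))) by (apply Rle_ge, Rlt_le, Rinv_0_lt_compat; lra).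
    assert (Hx : Rabs (x + INR j) <= Rabs x + INR j).
    { eapply Rle_trans; [apply Rabs_triang|]. rewrite (Rabs_right (INR j)) by (apply Rle_ge, pos_INR). lra. }
    assert (Hi : / INR (S j) <= 1). { rewrite <- Rinv_1. apply Rinv_le_contravar; lra. }
    assert (Hp : 0 <= (Rabs x + INR j) ^ j) by (apply pow_le; pose proof (Rabs_pos x); pose proof (pos_INR j); lra).
    assert (Hm : (Rabs x + INR j) ^ S j <= (Rabs x + INR (S j)) ^ S j).
    { apply pow_incr. rewrite S_INR. pose proof (Rabs_pos x); pose proof (pos_INR j); lra. }
    simpl pow in Hm |- *.
    pose proof (Rabs_pos (gtilde j x)). pose proof (Rabs_pos (x + INR j)).
    assert (Rabs (gtilde j x) * Rabs (x + INR j) <= (Rabs x + INR j) ^ j * (Rabs x + INR j)).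
    { apply Rmult_le_compat; auto. }
    assert (0 < / INR (S j)) by (apply Rinv_0_lt_compat; lra).
    assert (Rabs (gtilde j x) * Rabs (x + INR j) * / INR (S j) <= (Rabs x + INR j) ^ j * (Rabs x + INR j) * / INR (S j)) by (apply Rmult_le_compat_r; lra).
    assert (0 <= (Rabs x + INR j) ^ j * (Rabs x + INR j)) by (apply Rmult_le_pos; auto; pose proof (Rabs_pos x); pose proof (pos_INR j); lra).
    assert ((Rabs x + INR j) ^ j * (Rabs x + INR j) * / INR (S j) <= (Rabs x + INR j) ^ j * (Rabs x + INR j)) by nra.
    lra.
Qed.

Section Lin.
Variables (N : nat) (B P : Mat) (k p : nat) (dt : R) (ys neg : nat -> Vec).

Lemma hist_S m i : lts_hist N B P k p dt ys neg (S m) i =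
  if (i <=? m)%nat then lts_hist N B P k p dt ys neg m i else lts_incr N B P k p dt ys neg m (lts_hist N B P k p dt ys neg m).
Proof. reflexivity. Qed.

Lemma hist_stable m i : (i <= m)%nat -> lts_hist N B P k p dt ys neg m i = lts_hist N B P k p dt ys neg i i.
Proof.
  induction m; intros Hi.
  - replace i with 0%nat by lia; auto.
  - rewrite hist_S. destruct (Nat.leb_spec i m).
    + apply IHm; auto.
    + replace i with (S m) by lia. rewrite hist_S. destruct (Nat.leb_spec (S m) m); [lia|]. auto.
Qed.
End Lin.

Lemma chain_aff (G g : R -> R) a b c u : (forall t, is_derive G t (g t)) ->
  is_derive (fun u => G (a + (b + u) * c)) u (c * g (a + (b + u) * c)).
Proof.
  intros H. apply (is_derive_comp G (fun u => a + (b + u) * c)). apply H.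
  auto_derive; auto; ring.
Qed.

Section Main.
Variables (N k p : nat) (B P : Mat) (y : R -> Vec).
Hypothesis Hk : (1 <= k)%nat.
Hypothesis Hp : (1 <= p)%nat.
Hypothesis Hder : forall i t, (i < N)%nat ->
     derivable_pt_lim (fun s => y s i) t (matvec N B (y t) i).
Variables (T M tn dt : R).
Hypothesis HT : 0 <= T.
Hypothesis Htn : Rabs tn <= T.
Hypothesis Hdt : 0 < dt < 1.
Let lo := - (T + INR k + 1).
Let hi := T + INR k + 1.
Hypothesis HM : forall s t i, (s <= S k)%nat -> (i < N)%nat -> lo <= t <= hi -> Rabs (Yp N B y s t i) <= M.

Lemma INRk1 : 1 <= INR k.
Proof. apply (le_INR 1 k) in Hk. simpl in Hk. lra. Qed.

Hypothesis HM0 : 0 <= M.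

Lemma in_int z : Rabs z <= INR k -> lo <= tn + z <= hi.
Proof. intros H. unfold lo, hi. apply Rabs_le_between in Htn. apply Rabs_le_between in H. lra. Qed.

Lemma Rem_pt n r i z : (r + n <= S k)%nat -> (i < N)%nat -> Rabs z <= INR k ->
  Rabs (Rem N B y n r i tn (tn + z)) <= M * Rabs z ^ n.
Proof.
  intros H1 H2 H3. replace z with (tn + z - tn) at 2 by ring.
  apply (Rem_bound N B y Hder (S k) lo hi M HM); auto.
  pose proof (in_int 0) as H0. rewrite Rplus_0_r, Rabs_R0 in H0. apply H0. pose proof INRk1; lra. apply in_int; auto.
Qed.

Definition Gb := rsum k (fun jj => (INR k + INR jj) ^ jj).
Definition CDmax := rsum k (fun jj => rsum (S jj) (fun l => Rabs ((-1) ^ l * Cb jj l))).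

Lemma Gb_pos : 0 <= Gb.
Proof. apply rsum_nonneg. intros. apply pow_le. pose proof (pos_INR k); pose proof (pos_INR l); lra. Qed.
Lemma CDmax_pos : 0 <= CDmax.
Proof. apply rsum_nonneg. intros. apply rsum_nonneg. intros. apply Rabs_pos. Qed.

Lemma Tay_span i : Span k (fun s => Tay N B y k 0 i tn (tn + s * dt)).
Proof.
  unfold Tay. apply (Span_rsum k k (fun q s => Yp N B y (0 + q) tn i * pw q (tn + s * dt - tn))).
  - auto.
  - intros q Hq.
    apply (Sp_ext k (fun s => (Yp N B y (0 + q) tn i * (dt ^ q / INR (fact q))) * (0 + s) ^ q)).
    + apply Sp_scal. apply (Span_mono (S q)); [lia|]. apply Span_pow.
    + intros s. unfold pw. replace (tn + s * dt - tn) with (s * dt) by ring.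
      rewrite Rpow_mult_distr, Rplus_0_l. field. apply INR_fact_neq_0.
Qed.

Lemma interp_err i xi : (i < N)%nat -> Rabs xi <= INR k ->
  Rabs (rsum k (fun jj => gtilde jj xi * ND jj (fun s => y (tn + s * dt) i)) - y (tn + xi * dt) i)
  <= (Gb * CDmax + 1) * (M * (INR k * dt) ^ k).
Proof.
  intros Hi Hxi.
  set (Tn := fun s => Tay N B y k 0 i tn (tn + s * dt)).
  set (Rn := fun s => Rem N B y k 0 i tn (tn + s * dt)).
  assert (HF : forall s, y (tn + s * dt) i = Tn s + Rn s).
  { intros s. unfold Tn, Rn, Rem. simpl Yp. ring. }
  set (E := M * (INR k * dt) ^ k).
  pose proof INRk1 as Hk1.
  assert (HE : forall z, Rabs z <= INR k * dt -> Rabs (Rem N B y k 0 i tn (tn + z)) <= E).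
  { intros z Hz. eapply Rle_trans. apply Rem_pt; [lia|auto|].
    assert (INR k * dt <= INR k) by nra. lra.
    unfold E. apply Rmult_le_compat_l; auto. apply pow_incr. split; [apply Rabs_pos|auto]. }
  assert (HRl : forall l, (l < k)%nat -> Rabs (Rn (- INR l)) <= E).
  { intros l Hl. apply HE. rewrite Rabs_mult, Rabs_Ropp, (Rabs_right (INR l)) by (apply Rle_ge, pos_INR).
    rewrite (Rabs_right dt) by lra. apply Rmult_le_compat_r; [lra|]. apply le_INR; lia. }
  assert (HRx : Rabs (Rn xi) <= E).
  { apply HE. rewrite Rabs_mult, (Rabs_right dt) by lra. apply Rmult_le_compat_r; lra. }
  assert (HND : forall jj, (jj < k)%nat -> Rabs (ND jj Rn) <= CDmax * E).
  { intros jj Hjj. unfold ND. eapply Rle_trans. apply rsum_lin_bound.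
    intros l Hl. apply HRl. lia.
    apply Rmult_le_compat_r. unfold E; apply Rmult_le_pos; auto; apply pow_le; nra.
    unfold CDmax. apply (rsum_term_le k (fun jj => rsum (S jj) (fun l => Rabs ((-1) ^ l * Cb jj l))) jj); auto.
    intros. apply rsum_nonneg; intros; apply Rabs_pos. }
  assert (Hsplit : rsum k (fun jj => gtilde jj xi * ND jj (fun s => y (tn + s * dt) i)) - y (tn + xi * dt) i
     = rsum k (fun jj => gtilde jj xi * ND jj Rn) - Rn xi).
  { rewrite HF. rewrite (Newton k Tn (Tay_span i) xi).
    rewrite (rsum_ext k (fun jj => gtilde jj xi * ND jj (fun s => y (tn + s * dt) i))
                        (fun jj => gtilde jj xi * ND jj Tn + gtilde jj xi * ND jj Rn)).
    rewrite rsum_plus. ring.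
    intros jj _. rewrite (D_ext jj _ (fun s => Tn s + Rn s)), D_add; auto. ring. }
  rewrite Hsplit.
  assert (HG : rsum k (fun jj => Rabs (gtilde jj xi)) <= Gb).
  { apply rsum_le. intros jj Hjj. eapply Rle_trans. apply gtilde_bound. apply pow_incr.
    pose proof (Rabs_pos xi). pose proof (pos_INR jj). lra. }
  eapply Rle_trans. unfold Rminus. apply Rabs_triang. rewrite Rabs_Ropp.
  assert (H1 : Rabs (rsum k (fun jj => gtilde jj xi * ND jj Rn)) <= rsum k (fun jj => Rabs (gtilde jj xi)) * (CDmax * E)).
  { apply rsum_lin_bound. auto. }
  assert (0 <= E) by (unfold E; apply Rmult_le_pos; auto; apply pow_le; nra).
  pose proof Gb_pos. pose proof CDmax_pos.
  assert (rsum k (fun jj => Rabs (gtilde jj xi)) * (CDmax * E) <= Gb * (CDmax * E)).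
  { apply Rmult_le_compat_r; auto. apply Rmult_le_pos; auto. }
  fold E. nra.
Qed.

Definition Asum := rsum k (fun l => Rabs (alpha k l)).
Lemma Asum_pos : 0 <= Asum.
Proof. apply rsum_nonneg; intros; apply Rabs_pos. Qed.

Lemma INRp1 : 1 <= INR p.
Proof. apply (le_INR 1 p) in Hp. simpl in Hp. lra. Qed.

Lemma tau_err i m : (i < N)%nat -> (m < p)%nat ->
  Rabs (dt / INR p * rsum k (fun l => alpha k l * Yp N B y 1 (tn + (INR m - INR l) * (dt / INR p)) i)
        - (y (tn + INR (S m) * (dt / INR p)) i - y (tn + INR m * (dt / INR p)) i))
  <= (Asum * M * INR k ^ k + 2 * M) * dt ^ (S k).
Proof.
  intros Hi Hm. set (h := dt / INR p).
  pose proof INRp1 as Hp1. pose proof INRk1 as Hk1.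
  assert (Hh : 0 < h) by (unfold h; apply Rdiv_lt_0_compat; lra).
  assert (Hph : INR p * h = dt) by (unfold h; field; lra).
  assert (Hhd : h <= dt) by nra.
  set (T0 := fun t => Tay N B y (S k) 0 i tn t).
  set (T1 := fun t => Tay N B y k 1 i tn t).
  set (R0 := fun t => Rem N B y (S k) 0 i tn t).
  set (R1 := fun t => Rem N B y k 1 i tn t).
  assert (D0 : forall t, y t i = T0 t + R0 t) by (intros; unfold T0, R0, Rem; simpl Yp; ring).
  assert (D1 : forall t, Yp N B y 1 t i = T1 t + R1 t) by (intros; unfold T1, R1, Rem; ring).
  assert (EX : T0 (tn + (INR m + 1) * h) - T0 (tn + (INR m + 0) * h) =
     rsum k (fun l => alpha k l * (h * T1 (tn + (INR m + - INR l) * h)))).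
  { apply (AB_exact k (fun u => T0 (tn + (INR m + u) * h)) (fun u => h * T1 (tn + (INR m + u) * h))).
    - intros u. apply (chain_aff T0 T1). intros t. apply Tay_deriv.
    - apply Sp_scal. unfold T1, Tay.
      apply (Span_rsum k k (fun q u => Yp N B y (1 + q) tn i * pw q (tn + (INR m + u) * h - tn))); auto.
      intros q Hq.
      apply (Sp_ext k (fun u => (Yp N B y (1 + q) tn i * (h ^ q / INR (fact q))) * (INR m + u) ^ q)).
      + apply Sp_scal. apply (Span_mono (S q)); [lia|]. apply Span_pow.
      + intros u. unfold pw. replace (tn + (INR m + u) * h - tn) with ((INR m + u) * h) by ring.
        rewrite Rpow_mult_distr. field. apply INR_fact_neq_0. }
  assert (Hmh : 0 <= INR m * h <= dt).
  { split. apply Rmult_le_pos; [apply pos_INR|lra].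
    rewrite <- Hph. apply Rmult_le_compat_r; [lra|]. apply le_INR; lia. }
  assert (HSmh : 0 <= INR (S m) * h <= dt).
  { split. apply Rmult_le_pos; [apply pos_INR|lra].
    rewrite <- Hph. apply Rmult_le_compat_r; [lra|]. apply le_INR; lia. }
  assert (Hkd : dt <= INR k * dt) by nra.
  assert (HR0 : forall z, 0 <= z <= dt -> Rabs (R0 (tn + z)) <= M * dt ^ (S k)).
  { intros z Hz. unfold R0. eapply Rle_trans. apply Rem_pt; [lia|auto|].
    rewrite Rabs_right by lra. lra.
    apply Rmult_le_compat_l; auto. apply pow_incr. rewrite Rabs_right by lra. lra. }
  assert (HR1 : forall l, (l < k)%nat -> Rabs (R1 (tn + (INR m - INR l) * h)) <= M * (INR k * dt) ^ k).
  { intros l Hl.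
    assert (Hlh : 0 <= INR l * h <= INR k * dt).
    { split. apply Rmult_le_pos; [apply pos_INR|lra]. apply Rmult_le_compat; try lra. apply pos_INR.
      apply le_INR; lia. }
    assert (Hz : Rabs ((INR m - INR l) * h) <= INR k * dt).
    { apply Rabs_le. lra. }
    unfold R1. eapply Rle_trans. apply Rem_pt; [lia|auto|]. nra.
    apply Rmult_le_compat_l; auto. apply pow_incr. split; [apply Rabs_pos|auto]. }
  assert (Hsplit : h * rsum k (fun l => alpha k l * Yp N B y 1 (tn + (INR m - INR l) * h) i)
        - (y (tn + INR (S m) * h) i - y (tn + INR m * h) i)
      = h * rsum k (fun l => alpha k l * R1 (tn + (INR m - INR l) * h))
        - R0 (tn + INR (S m) * h) + R0 (tn + INR m * h)).
  { assert (EXh : T0 (tn + INR (S m) * h) - T0 (tn + INR m * h) = h * rsum k (fun l => alpha k l * T1 (tn + (INR m - INR l) * h))).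
    { rewrite S_INR. replace (tn + INR m * h) with (tn + (INR m + 0) * h) by ring. rewrite EX.
      rewrite <- rsum_scal. apply rsum_ext. intros l _. replace (INR m + - INR l) with (INR m - INR l) by ring. ring. }
    assert (SP : rsum k (fun l => alpha k l * Yp N B y 1 (tn + (INR m - INR l) * h) i) =
       rsum k (fun l => alpha k l * T1 (tn + (INR m - INR l) * h)) + rsum k (fun l => alpha k l * R1 (tn + (INR m - INR l) * h))).
    { rewrite <- rsum_plus. apply rsum_ext. intros. rewrite D1. ring. }
    rewrite SP, !D0. lra. }
  rewrite Hsplit.
  pose proof Asum_pos as HA.
  assert (H1 : Rabs (rsum k (fun l => alpha k l * R1 (tn + (INR m - INR l) * h))) <= Asum * (M * (INR k * dt) ^ k)).
  { apply rsum_lin_bound. auto. }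
  pose proof (HR0 _ HSmh) as H2. pose proof (HR0 _ Hmh) as H3.
  assert (E1 : Rabs (h * rsum k (fun l => alpha k l * R1 (tn + (INR m - INR l) * h))) <= dt * (Asum * (M * (INR k * dt) ^ k))).
  { rewrite Rabs_mult, Rabs_right by lra. apply Rmult_le_compat; auto; try lra. apply Rabs_pos. }
  assert (E2 : dt * (Asum * (M * (INR k * dt) ^ k)) = Asum * M * INR k ^ k * dt ^ S k).
  { rewrite Rpow_mult_distr. simpl pow. ring. }
  assert (Habs : forall a b c, Rabs (a - b + c) <= Rabs a + Rabs b + Rabs c).
  { intros a b c. eapply Rle_trans. apply Rabs_triang. pose proof (Rabs_triang a (- b)). rewrite Rabs_Ropp in H. 
    unfold Rminus. lra. }
  eapply Rle_trans. apply Habs. lra.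
Qed.

Hypothesis HP1 : forall i j, (i < N)%nat -> (j < N)%nat -> i <> j -> P i j = 0.
Hypothesis HP2 : forall i, (i < N)%nat -> P i i = 0 \/ P i i = 1.

Lemma matvecP v i : (i < N)%nat -> matvec N P v i = P i i * v i.
Proof.
  intros Hi. unfold matvec. apply (rsum_single N i (fun j => P i j * v j)); auto.
  intros j Hj Hne. rewrite HP1; auto. ring.
Qed.

Definition Bn := rsum N (fun i => rsum N (fun j => Rabs (B i j))).
Lemma Bn_pos : 0 <= Bn.
Proof. apply rsum_nonneg; intros; apply rsum_nonneg; intros; apply Rabs_pos. Qed.

Lemma B_bound i b E : (i < N)%nat -> (forall j, (j < N)%nat -> Rabs (b j) <= E) ->
  Rabs (rsum N (fun j => B i j * b j)) <= Bn * E.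
Proof.
  intros Hi H. assert (0 <= E).
  { eapply Rle_trans; [apply Rabs_pos| apply (H i Hi)]. }
  eapply Rle_trans. apply rsum_lin_bound. exact H.
  apply Rmult_le_compat_r; auto. unfold Bn.
  apply (rsum_term_le N (fun i => rsum N (fun j => Rabs (B i j))) i); auto.
  intros; apply rsum_nonneg; intros; apply Rabs_pos.
Qed.

Let ys := fun l => y (tn - INR l * dt).
Let neg := fun j => matvec N P (y (tn - INR j * dt / INR p)).
Let h := dt / INR p.
Definition xs m := lts_hist N B P k p dt ys neg m m.
Definition err m i := xs m i - y (tn + INR m * h) i.

Lemma h_facts : 0 < h /\ h <= dt /\ INR p * h = dt.
Proof.
  pose proof INRp1. unfold h. split; [apply Rdiv_lt_0_compat; lra|]. split; [|field; lra].
  unfold Rdiv. rewrite <- (Rmult_1_r dt) at 2. apply Rmult_le_compat_l; [lra|].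
  rewrite <- Rinv_1. apply Rinv_le_contravar; lra.
Qed.

Lemma step_eq m i : (i < N)%nat ->
  xs (S m) i = xs m i
   + h * rsum N (fun j => B i j * ((1 - P j j) * rsum k (fun l => beta k p m l * ys l j)))
   + h * rsum N (fun j => B i j * (P j j * rsum k (fun l => alpha k l *
           lts_lookup neg (lts_hist N B P k p dt ys neg m) m l j))).
Proof.
  intros Hi. unfold xs. rewrite hist_S. destruct (Nat.leb_spec (S m) m); [lia|].
  unfold lts_incr, vadd, vscale, vsub, vsum. fold h.
  f_equal; [f_equal|].
  - f_equal. unfold matvec at 1. apply rsum_ext. intros j Hj. rewrite matvecP; auto. unfold vsum. ring.
  - f_equal. unfold matvec at 1. apply rsum_ext. intros j Hj. rewrite matvecP; auto.
Qed.

Definition S1c := Asum * (Gb * CDmax + 1) * M * INR k ^ k.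
Definition Tauc := Asum * M * INR k ^ k + 2 * M.
Definition Kc := 1 + Bn * Asum.
Definition Sb := (Bn * S1c + Tauc) * dt ^ (S k).

Lemma xi_bound m l : (m < p)%nat -> (l < k)%nat -> Rabs ((INR m - INR l) / INR p) <= INR k.
Proof.
  intros Hm Hl. pose proof INRp1. pose proof INRk1.
  assert (A1 : INR m < INR p) by (apply lt_INR; auto).
  assert (A2 : INR l < INR k) by (apply lt_INR; auto).
  pose proof (pos_INR m). pose proof (pos_INR l).
  apply Rabs_le. split.
  - apply (Rmult_le_reg_r (INR p)); [lra|]. unfold Rdiv. rewrite Rmult_assoc, Rinv_l by lra. nra.
  - apply (Rmult_le_reg_r (INR p)); [lra|]. unfold Rdiv. rewrite Rmult_assoc, Rinv_l by lra. nra.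
Qed.

Lemma s1w_bound m j : (m < p)%nat -> (j < N)%nat ->
  Rabs (rsum k (fun l => beta k p m l * ys l j) - rsum k (fun l => alpha k l * y (tn + (INR m - INR l) * h) j))
  <= S1c * dt ^ k.
Proof.
  intros Hm Hj. set (F := fun s => y (tn + s * dt) j).
  rewrite (rsum_ext k (fun l => beta k p m l * ys l j) (fun l => beta k p m l * F (- INR l))).
  2:{ intros. unfold F, ys. replace (tn + - INR l * dt) with (tn - INR l * dt) by ring. auto. }
  rewrite beta_sum.
  rewrite (rsum_ext k (fun l => alpha k l * y (tn + (INR m - INR l) * h) j)
                      (fun l => alpha k l * F ((INR m - INR l) / INR p))).
  2:{ intros. unfold F, h. replace ((INR m - INR l) / INR p * dt) with ((INR m - INR l) * (dt / INR p)).
      auto. field. pose proof INRp1; lra. }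
  rewrite <- rsum_minus.
  rewrite (rsum_ext k _ (fun l => alpha k l * (rsum k (fun jj => gtilde jj ((INR m - INR l) / INR p) * ND jj F)
        - F ((INR m - INR l) / INR p)))) by (intros; ring).
  eapply Rle_trans. apply rsum_lin_bound.
  - intros l Hl. unfold F. apply interp_err; auto. apply xi_bound; auto.
  - unfold S1c. rewrite Rpow_mult_distr. fold Asum. right; ring.
Qed.

Lemma step_bound m G : (m < p)%nat -> 0 <= G ->
  (forall j i, (j <= m)%nat -> (i < N)%nat -> Rabs (err j i) <= G) ->
  forall i, (i < N)%nat -> Rabs (err (S m) i) <= Kc * G + Sb.
Proof.
  intros Hm HG HE i Hi.
  destruct h_facts as [Hh [Hhd Hph]].
  set (w := fun j => rsum k (fun l => alpha k l * y (tn + (INR m - INR l) * h) j)).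
  set (s1 := fun j => rsum k (fun l => beta k p m l * ys l j)).
  set (s2 := fun j => rsum k (fun l => alpha k l * lts_lookup neg (lts_hist N B P k p dt ys neg m) m l j)).
  assert (Wsw : rsum N (fun j => B i j * w j) = rsum k (fun l => alpha k l * Yp N B y 1 (tn + (INR m - INR l) * h) i)).
  { unfold w. simpl Yp. unfold matvec.
    rewrite (rsum_ext N _ (fun j => rsum k (fun l => B i j * (alpha k l * y (tn + (INR m - INR l) * h) j)))).
    2:{ intros. rewrite rsum_scal; auto. }
    rewrite rsum_comm. apply rsum_ext. intros. rewrite <- rsum_scal. apply rsum_ext; intros; ring. }
  assert (Q : rsum N (fun j => B i j * ((1 - P j j) * s1 j)) + rsum N (fun j => B i j * (P j j * s2 j))
     = rsum N (fun j => B i j * ((1 - P j j) * (s1 j - w j))) + rsum N (fun j => B i j * (P j j * (s2 j - w j)))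
       + rsum N (fun j => B i j * w j)).
  { rewrite <- !rsum_plus. apply rsum_ext; intros; ring. }
  set (X1 := rsum N (fun j => B i j * ((1 - P j j) * s1 j))) in Q.
  set (X2 := rsum N (fun j => B i j * (P j j * s2 j))) in Q.
  set (Z1 := rsum N (fun j => B i j * ((1 - P j j) * (s1 j - w j)))) in Q.
  set (Z2 := rsum N (fun j => B i j * (P j j * (s2 j - w j)))) in Q.
  assert (Eq : err (S m) i = err m i + h * Z1 + h * Z2 +
     (h * rsum k (fun l => alpha k l * Yp N B y 1 (tn + (INR m - INR l) * h) i)
        - (y (tn + INR (S m) * h) i - y (tn + INR m * h) i))).
  { unfold err. rewrite step_eq; auto.
    change (rsum N (fun j => B i j * ((1 - P j j) * rsum k (fun l => beta k p m l * ys l j)))) with X1.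
    change (rsum N (fun j => B i j * (P j j * rsum k (fun l => alpha k l * lts_lookup neg (lts_hist N B P k p dt ys neg m) m l j)))) with X2.
    rewrite <- Wsw.
    assert (h * X1 + h * X2 = h * Z1 + h * Z2 + h * rsum N (fun j => B i j * w j)).
    { rewrite <- !Rmult_plus_distr_l. rewrite Q. ring. }
    lra. }
  rewrite Eq.
  pose proof (tau_err i m Hi Hm) as HT1. fold h in HT1.
  assert (HZ1 : Rabs Z1 <= Bn * (S1c * dt ^ k)).
  { apply B_bound; auto. intros j Hj. rewrite Rabs_mult.
    assert (Rabs (1 - P j j) <= 1) by (destruct (HP2 j Hj) as [-> | ->]; rewrite ?Rminus_0_r, ?Rminus_diag, ?Rabs_R0, ?Rabs_R1; lra).
    pose proof (s1w_bound m j Hm Hj). change (Rabs (s1 j - w j) <= S1c * dt ^ k) in H0. pose proof (Rabs_pos (s1 j - w j)).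
    pose proof (Rabs_pos (1 - P j j)). nra. }
  assert (HZ2 : Rabs Z2 <= Bn * (Asum * G)).
  { apply B_bound; auto. intros j Hj. unfold s2, w. rewrite <- rsum_minus, <- rsum_scal.
    eapply Rle_trans. 2:{ right. unfold Asum. rewrite (Rmult_comm _ G), <- rsum_scal. reflexivity. }
    apply rsum_abs_le. intros l Hl.
    replace (P j j * (alpha k l * lts_lookup neg (lts_hist N B P k p dt ys neg m) m l j - alpha k l * y (tn + (INR m - INR l) * h) j))
      with (alpha k l * (P j j * (lts_lookup neg (lts_hist N B P k p dt ys neg m) m l j - y (tn + (INR m - INR l) * h) j))) by ring.
    rewrite Rabs_mult. rewrite (Rmult_comm G). apply Rmult_le_compat_l; [apply Rabs_pos|].
    unfold lts_lookup. destruct (Nat.leb_spec l m).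
    - rewrite hist_stable by lia. fold (xs (m - l)).
      replace (INR m - INR l) with (INR (m - l)) by (rewrite minus_INR; auto).
      fold (err (m - l) j). rewrite Rabs_mult.
      assert (Rabs (P j j) <= 1) by (destruct (HP2 j Hj) as [-> | ->]; rewrite ?Rabs_R0, ?Rabs_R1; lra).
      pose proof (HE (m - l)%nat j ltac:(lia) Hj). pose proof (Rabs_pos (P j j)). pose proof (Rabs_pos (err (m - l) j)). nra.
    - unfold neg. rewrite matvecP; auto.
      replace (tn - INR (l - m) * dt / INR p) with (tn + (INR m - INR l) * h).
      2:{ rewrite minus_INR by lia. unfold h. field. pose proof INRp1; lra. }
      replace (P j j * (P j j * y (tn + (INR m - INR l) * h) j - y (tn + (INR m - INR l) * h) j)) with 0.
      rewrite Rabs_R0; auto.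
      destruct (HP2 j Hj) as [-> | ->]; ring. }
  assert (Habs : forall a b c d, Rabs (a + b + c + d) <= Rabs a + Rabs b + Rabs c + Rabs d).
  { intros a b c d. pose proof (Rabs_triang (a + b + c) d). pose proof (Rabs_triang (a + b) c).
    pose proof (Rabs_triang a b). lra. }
  eapply Rle_trans. apply Habs.
  rewrite !Rabs_mult, (Rabs_right h) by lra.
  pose proof (HE m i ltac:(lia) Hi).
  pose proof Bn_pos. pose proof Asum_pos.
  assert (h * Rabs Z1 <= dt * (Bn * (S1c * dt ^ k))) by (apply Rmult_le_compat; auto; try lra; apply Rabs_pos).
  assert (h * Rabs Z2 <= 1 * (Bn * (Asum * G))) by (apply Rmult_le_compat; auto; try lra; apply Rabs_pos).
  unfold Kc, Sb, Tauc. unfold Tauc in HT1. simpl pow in *. nra.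
Qed.

Lemma Sb_pos : 0 <= Sb.
Proof.
  unfold Sb, S1c, Tauc. pose proof Asum_pos. pose proof Gb_pos. pose proof CDmax_pos. pose proof Bn_pos.
  pose proof INRk1. assert (0 <= INR k ^ k) by (apply pow_le; lra).
  assert (0 <= dt ^ S k) by (apply pow_le; lra).
  apply Rmult_le_pos; auto.
  assert (0 <= Asum * (Gb * CDmax + 1) * M * INR k ^ k).
  { repeat apply Rmult_le_pos; auto. nra. }
  assert (0 <= Asum * M * INR k ^ k) by (repeat apply Rmult_le_pos; auto).
  nra.
Qed.

Lemma err_all m : (m <= p)%nat -> forall j i, (j <= m)%nat -> (i < N)%nat ->
  Rabs (err j i) <= INR m * Kc ^ m * Sb.
Proof.
  pose proof Sb_pos as HS. pose proof Bn_pos. pose proof Asum_pos.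
  assert (HK : 1 <= Kc) by (unfold Kc; nra).
  induction m; intros Hm j i Hj Hi.
  - replace j with 0%nat by lia. unfold err, xs. simpl lts_hist. unfold ys.
    replace (tn - INR 0 * dt) with (tn + INR 0 * h) by (simpl; ring). rewrite Rminus_diag, Rabs_R0. simpl. lra.
  - assert (HKm : 1 <= Kc ^ m) by (apply pow_R1_Rle; auto).
    assert (HG : 0 <= INR m * Kc ^ m * Sb) by (apply Rmult_le_pos; [apply Rmult_le_pos; [apply pos_INR|lra]|auto]).
    assert (Hmono : INR m * Kc ^ m * Sb <= INR (S m) * Kc ^ S m * Sb).
    { rewrite S_INR. simpl pow. apply Rmult_le_compat_r; auto. pose proof (pos_INR m).
      assert (Kc ^ m <= Kc * Kc ^ m) by nra.
      assert (INR m * Kc ^ m <= INR m * (Kc * Kc ^ m)) by (apply Rmult_le_compat_l; auto). nra. }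
    destruct (Nat.eq_dec j (S m)) as [->|Hne].
    + apply (Rle_trans _ (Kc * (INR m * Kc ^ m * Sb) + Sb)).
      { apply step_bound; [lia|auto| |auto]. intros j' i' Hj' Hi'. apply IHm; auto. lia. }
      rewrite S_INR. simpl pow.
      assert (Sb <= Kc * Kc ^ m * Sb) by (assert (1 <= Kc * Kc ^ m) by nra; nra). nra.
    + eapply Rle_trans; [apply IHm; auto; lia|]. auto.
Qed.
End Main.

Definition unitv (i : nat) : Vec := fun j => if (j =? i)%nat then 1 else 0.

Section NrmS.
Variables (N : nat) (nrm : Vec -> R).
Hypothesis Hext : forall u v, (forall i, (i < N)%nat -> u i = v i) -> nrm u = nrm v.
Hypothesis Hscal : forall c v, nrm (vscale c v) = Rabs c * nrm v.
Hypothesis Htri : forall u v, nrm (vadd u v) <= nrm u + nrm v.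
Hypothesis Hnn : forall v, 0 <= nrm v.

Lemma nrm_vsum n f : nrm (vsum n f) <= rsum n (fun i => nrm (f i)).
Proof.
  induction n; simpl.
  - rewrite (Hext (vsum 0 f) (vscale 0 (fun _ => 0))). rewrite Hscal, Rabs_R0. lra.
    intros; unfold vsum, vscale; simpl; ring.
  - change (vsum (S n) f) with (vadd (vsum n f) (f n)). eapply Rle_trans; [apply Htri|]. lra.
Qed.

Lemma nrm_bound v E : (forall i, (i < N)%nat -> Rabs (v i) <= E) ->
  nrm v <= rsum N (fun i => nrm (unitv i)) * E.
Proof.
  intros H.
  rewrite (Hext v (vsum N (fun i => vscale (v i) (unitv i)))).
  - eapply Rle_trans; [apply nrm_vsum|]. rewrite Rmult_comm, <- rsum_scal. apply rsum_le.
    intros i Hi. rewrite Hscal. apply Rmult_le_compat_r; auto.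
  - intros j Hj. unfold vsum, vscale, unitv. symmetry.
    rewrite (rsum_single N j); auto. rewrite Nat.eqb_refl; ring.
    intros l Hl Hne. destruct (Nat.eqb_spec j l); [lia|ring].
Qed.
End NrmS.

Theorem mainTheorem2 (N k p : nat) (B P : Mat) (y0 : Vec) (y : R -> Vec)
  (nrm : Vec -> R) :
  (1 <= k)%nat -> (1 <= p)%nat ->
  (* P diagonal with entries in {0,1} *)
  (forall i j, (i < N)%nat -> (j < N)%nat -> i <> j -> P i j = 0) ->
  (forall i, (i < N)%nat -> P i i = 0 \/ P i i = 1) ->
  (* y solves y' = B y, y(0) = y0, i.e. y(t) = e^{tB} y0 *)
  (forall i, (i < N)%nat -> y 0 i = y0 i) ->
  (forall i t, (i < N)%nat ->
     derivable_pt_lim (fun s => y s i) t (matvec N B (y t) i)) ->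
  (* nrm is a norm on R^N *)
  (forall u v, (forall i, (i < N)%nat -> u i = v i) -> nrm u = nrm v) ->
  (forall v, 0 <= nrm v) ->
  (forall v, nrm v = 0 -> forall i, (i < N)%nat -> v i = 0) ->
  (forall c v, nrm (vscale c v) = Rabs c * nrm v) ->
  (forall u v, nrm (vadd u v) <= nrm u + nrm v) ->
  forall T : R, 0 <= T ->
  exists Cst delta : R, 0 < delta /\
    forall tn dt : R, Rabs tn <= T -> 0 < dt < delta ->
      nrm (vsub (lts_step N B P k p dt
                   (fun l => y (tn - INR l * dt))
                   (fun j => matvec N P (y (tn - INR j * dt / INR p))))
                (y (tn + dt)))
        <= Cst * dt ^ (k + 1).
Proof.
  intros Hk Hp HP1 HP2 Hy0 Hder Hext Hnn Hzero Hscal Htri T HT.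
  destruct (Yp_bounded N B y Hder (S k) (-(T + INR k + 1)) (T + INR k + 1)) as [M0 HM0].
  { pose proof (pos_INR k); lra. }
  set (M := Rmax M0 0).
  assert (HM : forall s t i, (s <= S k)%nat -> (i < N)%nat -> - (T + INR k + 1) <= t <= T + INR k + 1 ->
     Rabs (Yp N B y s t i) <= M).
  { intros. eapply Rle_trans; [apply HM0; auto| apply Rmax_l]. }
  assert (HMp : 0 <= M) by apply Rmax_r.
  set (Nu := rsum N (fun i => nrm (unitv i))).
  exists (Nu * (INR p * Kc N k B ^ p * (Bn N B * S1c k M + Tauc k M))), 1.
  split; [lra|]. intros tn dt Htn Hdt.
  pose proof (err_all N k p B P y Hk Hp Hder T M tn dt Htn Hdt HM HMp HP1 HP2 p (le_n p)) as HE.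
  eapply Rle_trans.
  - apply (nrm_bound N nrm Hext Hscal Htri Hnn) with (E := INR p * Kc N k B ^ p * Sb N k B M dt).
    intros i Hi. specialize (HE p i (le_n p) Hi). unfold err, xs in HE.
    unfold vsub, lts_step.
    replace (tn + dt) with (tn + INR p * (dt / INR p)). exact HE.
    field. apply not_0_INR; lia.
  - fold Nu. unfold Sb. rewrite Nat.add_1_r. right; ring.
Qed.
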